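(* Let $G$ be a finite graph with maximum degree $\Delta$ and let $\mathcal{V}=\{V_1,\ldots,V_n\}$ be a partition of $V(G)$ with $|V_i|\ge2\Delta+1$ for all $i$. Then $\mathbf{RG}(\mathcal{I}(G),\mathcal{V})$ is connected.
   Context: $\mathcal{I}(G)$ is the complex of independent sets of $G$. An independent transversal is an independent set of $G$ containing exactly one vertex from each $V_i$. $\mathbf{RG}(\mathcal{I}(G),\mathcal{V})$ is the graph on the independent transversals, two being adjacent if their union is an independent set of size $n+1$. *)

(* Defs.v *)
From mathcomp Require Import all_boot.
Set Implicit Arguments. Unset Strict Implicit. Unset Printing Implicit Defensive.

Section Defs.
Variable T : finType.
(* A finite simple graph on vertex set T: e symmetric and irreflexive
   (imposed as hypotheses in the theorem). *)
Variable e : rel T.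

Definition nbhd (x : T) : {set T} := [set y | e x y].
Definition degree (x : T) : nat := #|nbhd x|.
Definition maxdeg : nat := \max_(x : T) degree x.

(* independent sets of G, i.e. faces of the complex I(G) *)
Definition independent (S : {set T}) : bool :=
  [forall x in S, forall y in S, ~~ e x y].

Definition indep_transversal (P : {set {set T}}) (S : {set T}) : bool :=
  independent S && [forall B in P, #|S :&: B| == 1].

Definition RG_adj (P : {set {set T}}) (S S' : {set T}) : bool :=
  independent (S :|: S') && (#|S :|: S'| == #|P|.+1).

Definition RG_connected (P : {set {set T}}) : Prop :=
  forall S S', indep_transversal P S -> indep_transversal P S' ->
    exists p : seq {set T},
      [/\ path (RG_adj P) S p, last S p = S' & all (indep_transversal P) p].
End Defs.

(* Main.v *)
Require Import Defs.
From mathcomp Require Import all_boot zify.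
Set Implicit Arguments. Unset Strict Implicit. Unset Printing Implicit Defensive.

Section Proof.
Variables (T : finType) (e : rel T) (P : {set {set T}}).
Hypothesis esym : symmetric e.
Hypothesis eirr : irreflexive e.
Hypothesis Ppart : partition P [set: T].
Local Notation Dl := (maxdeg e).
Hypothesis Psize : forall B, B \in P -> (2 * Dl).+1 <= #|B|.

Local Notation pb := (pblock P).
Implicit Types (S R X Y Z C A B : {set T}).

Lemma ltnT m n p : m < n -> n < p -> m < p.
Proof. exact: ltn_trans. Qed.

Lemma tiP : trivIset P. Proof. by case/and3P: Ppart. Qed.
Lemma coverP x : x \in cover P. Proof. by case/and3P: Ppart => /eqP -> _ _; rewrite inE. Qed.
Lemma P0 : set0 \notin P. Proof. by case/and3P: Ppart. Qed.
Lemma pb_mem x : pb x \in P. Proof. exact: pblock_mem (coverP x). Qed.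
Lemma mem_pb x : x \in pb x. Proof. by rewrite mem_pblock coverP. Qed.
Lemma pb_def B x : B \in P -> x \in B -> pb x = B. Proof. exact: def_pblock tiP. Qed.
Lemma pb_same x y : y \in pb x -> pb y = pb x. Proof. exact: same_pblock tiP. Qed.

Definition free (X : {set T}) w := [forall x in X, ~~ e w x].
Lemma freeP (X : {set T}) w : reflect (forall x, x \in X -> ~~ e w x) (free X w).
Proof. exact: forall_inP. Qed.

Definition IT S := indep_transversal e P S.
Definition tr (S : {set T}) :=
  (forall z, exists2 s, s \in S & pb s = pb z) /\
  (forall s t, s \in S -> t \in S -> pb s = pb t -> s = t).

Lemma indepP S : reflect (forall x y, x \in S -> y \in S -> ~~ e x y) (independent e S).
Proof.
apply: (iffP forall_inP) => [H x y xS yS| H x xS].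
  exact: (forall_inP (H x xS)).
by apply/forall_inP => y yS; exact: H.
Qed.

Lemma ITP S : IT S <-> independent e S /\ tr S.
Proof.
rewrite /IT /indep_transversal; split.
  case/andP => -> /forall_inP H; split => //; split.
    move=> z; have /cards1P [s Hs] := H _ (pb_mem z).
    have : s \in S :&: pb z by rewrite Hs set11.
    rewrite inE => /andP [sS sz]; exists s => //; exact: pb_same.
  move=> s t sS tS est; have /cards1P [u Hu] := H _ (pb_mem s).
  have : s \in S :&: pb s by rewrite inE sS mem_pb.
  have : t \in S :&: pb s by rewrite inE tS est mem_pb.
  by rewrite Hu !inE => /eqP -> /eqP ->.
case=> -> [cov un]; apply/forall_inP => B PB.
have : B != set0 by apply: contraNneq P0 => <-.
case/set0Pn => z zB; have [s sS esz] := cov z.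
apply/cards1P; exists s; apply/setP => t; rewrite !inE.
have sB : s \in B by rewrite -(pb_def PB zB) -esz mem_pb.
apply/andP/eqP => [[tS tB]|->]; last by [].
apply: un => //; by rewrite (pb_def PB tB) (pb_def PB sB).
Qed.

Lemma IT_indep S : IT S -> independent e S. Proof. by case/ITP. Qed.
Lemma IT_tr S : IT S -> tr S. Proof. by case/ITP. Qed.

Lemma card_IT S : IT S -> #|S| = #|P|.
Proof.
move=> /IT_tr [cov un].
have -> : P = pb @: S.
  apply/setP => B; apply/idP/imsetP => [PB|[s _ ->]]; last exact: pb_mem.
  have : B != set0 by apply: contraNneq P0 => <-.
  case/set0Pn => z zB; have [s sS esz] := cov z.
  by exists s => //; rewrite esz (pb_def PB zB).
by rewrite card_in_imset // => s t sS tS; apply: un.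
Qed.


Lemma indep_sub A B : A \subset B -> independent e B -> independent e A.
Proof.
move=> /subsetP sAB /indepP H; apply/indepP => u v uA vA; apply: H; exact: sAB.
Qed.

Lemma indep_add S y : independent e S -> free S y -> independent e (y |: S).
Proof.
move=> /indepP H /freeP F; apply/indepP => u v.
case/setU1P => [->|uS]; case/setU1P => [->|vS].
- by rewrite eirr.
- exact: F.
- by rewrite esym; apply: F.
- exact: H.
Qed.

Definition rr S S' := [&& IT S, IT S' & RG_adj e P S S'].
Lemma rr_sym : symmetric rr.
Proof. by move=> S S'; rewrite /rr /RG_adj setUC andbCA. Qed.
Definition conn S S' := connect rr S S'.
Lemma conn_sym S S' : conn S S' -> conn S' S.
Proof. by rewrite /conn (sym_connect_sym rr_sym). Qed.
Lemma conn_trans S1 S2 S3 : conn S1 S2 -> conn S2 S3 -> conn S1 S3.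
Proof. exact: connect_trans. Qed.
Lemma conn_step S S' : rr S S' -> conn S S'.
Proof. exact: connect1. Qed.

Lemma swap_IT S x y : IT S -> x \in S -> pb y = pb x -> y != x -> free S y ->
  IT (y |: (S :\ x)) /\ rr S (y |: (S :\ x)).
Proof.
move=> ITS xS eyx nyx fy.
have [cov un] := IT_tr ITS.
have yS : y \notin S by apply: contraNN nyx => yS; apply/eqP; exact: un.
have iS := IT_indep ITS.
have iyS : independent e (y |: S) by exact: indep_add.
have IT' : IT (y |: (S :\ x)).
  apply/ITP; split.
    apply: indep_sub iyS; apply/subsetP => u; rewrite !inE.
    by case/orP => [->|/andP[_ ->]]; rewrite ?orbT.
  split.
    move=> z; have [s sS esz] := cov z.
    case: (eqVneq s x) => [sx|sx].
      by exists y; [rewrite setU11 | rewrite eyx -sx].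
    by exists s => //; rewrite !inE sx sS orbT.
  move=> u v; rewrite !inE => /orP[/eqP->|/andP[ux uS]] /orP[/eqP->|/andP[vx vS]] //.
  - by move=> e1; case/eqP: vx; apply: un => //; rewrite -e1 eyx.
  - by move=> e1; case/eqP: ux; apply: un => //; rewrite e1 eyx.
  - exact: un.
split=> //; rewrite /rr ITS IT' /RG_adj.
have -> : S :|: (y |: (S :\ x)) = y |: S.
  by apply/setP => u; rewrite !inE; case: (u == y); case: (u == x); case: (u \in S).
rewrite /= iyS /=.
by rewrite cardsU1 yS (card_IT ITS) add1n.
Qed.


Lemma card_sub_lt A B x : A \subset B :\ x -> x \in B -> #|A| < #|B|.
Proof.
move=> /subset_leq_card sAB xB; rewrite (cardsD1 x B) xB; exact: leq_ltn_trans sAB _.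
Qed.

Lemma IT_eq S S' : IT S -> IT S' -> #|S :\: S'| = 0 -> S = S'.
Proof.
move=> IS IS' /eqP; rewrite cards_eq0 setD_eq0 => sub.
by apply/eqP; rewrite eqEcard sub (card_IT IS) (card_IT IS') leqnn.
Qed.

Lemma comp_conn S S' : IT S -> IT S' -> independent e (S :|: S') -> conn S S'.
Proof.
move=> IS IS'; move: {2}#|S :\: S'| (leqnn #|S :\: S'|) => n.
elim: n S IS => [|n IH] S IS le ind.
  have -> : S = S' by apply: IT_eq => //; lia.
  exact: connect0.
have [/(IT_eq IS IS') ->|] := eqVneq #|S :\: S'| 0%N; first exact: connect0.
rewrite -lt0n card_gt0 => /set0Pn [x]; rewrite inE => /andP [xS' xS].
have [s sS' esx] := (IT_tr IS').1 x.
have nsx : s != x by apply: contraNneq xS' => <-.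
have fs : free S s.
  apply/freeP => u uS; move/indepP: ind; apply; by rewrite inE ?sS' ?uS ?orbT.
have [IS1 r1] := swap_IT IS xS esx nsx fs.
apply: conn_trans (conn_step r1) _; apply: IH => //.
  rewrite -ltnS; apply: leq_trans le; apply: (@card_sub_lt _ _ x).
    apply/subsetP => u; rewrite !inE; case: (eqVneq u s) => [->|]; first by rewrite sS'.
    by move=> _ /= /andP [uS' /andP [ux uS]]; rewrite ux uS' uS.
  by rewrite inE xS' xS.
apply: indep_sub ind; apply/subsetP => u; rewrite !inE.
by case: (eqVneq u s) => [->|_]; rewrite ?sS' ?orbT //= => /orP [/andP [_ ->]|->]; rewrite ?orbT.
Qed.


Definition flagD R S z := [exists x in R, (pb x == pb z) && ~~ free S x].
Definition mixR R S := [set z | if flagD R S z then z \in S else z \in R].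

Section Reduction.
Variable d : nat.
Hypothesis IHd : forall R S, IT R -> IT S -> #|R :\: S| < d -> conn R S.

Lemma lemA R S x0 : IT R -> IT S -> #|R :\: S| <= d ->
  x0 \in R -> x0 \notin S -> free S x0 -> conn R S.
Proof.
move=> IR IS le x0R x0S fx0.
have [covR unR] := IT_tr IR; have [covS unS] := IT_tr IS.
have iR := IT_indep IR; have iS := IT_indep IS.
pose flag := flagD R S.
have flag_pb z z' : pb z = pb z' -> flag z = flag z'.
  by move=> ez; rewrite /flag /flagD; apply: eq_existsb => x; rewrite ez.
have flagR z : z \in R -> flag z = ~~ free S z.
  move=> zR; apply/existsP/idP => [[x /andP [xR /andP [/eqP exz fx]]]|fz].
    by rewrite -(unR x z xR zR exz).
  by exists z; rewrite zR eqxx.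
pose Rs := mixR R S.
have RsE z : (z \in Rs) = (if flag z then z \in S else z \in R) by rewrite inE.
clearbody Rs.
have freeRs u : u \in Rs -> u \notin S -> free S u.
  rewrite RsE; case fu: (flag u) => uX uS; first by rewrite uX in uS.
  by move/negbT: fu; rewrite flagR // negbK.
have IRs : IT Rs.
  apply/ITP; split.
    apply/indepP => u v; rewrite !RsE.
    case fu: (flag u); case fv: (flag v) => uX vX.
    - by move/indepP: iS; apply.
    - have : free S v by move/negbT: fv; rewrite flagR // negbK.
      by move/freeP => /(_ u uX); rewrite esym.
    - have : free S u by move/negbT: fu; rewrite flagR // negbK.
      by move/freeP => /(_ v vX).
    - by move/indepP: iR; apply.
  split.
    move=> z; have [r rR erz] := covR z.
    case fz: (flag z).
      have [s sS esz] := covS z.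
      by exists s => //; rewrite RsE (flag_pb _ _ esz) fz.
    by exists r => //; rewrite RsE (flag_pb _ _ erz) fz.
  move=> u v; rewrite !RsE => + + euv; rewrite (flag_pb _ _ euv).
  case: (flag v) => uX vX; [exact: unS | exact: unR].
apply: (@conn_trans _ Rs).
  apply: IHd => //; apply: leq_trans le; apply: (@card_sub_lt _ _ x0).
    apply/subsetP => z; rewrite !inE RsE.
    case/andP => + zR; rewrite zR; case fz: (flag z) => //= zS.
    rewrite zS /= ?andbT; apply: contraTneq fz => ->; by rewrite flagR // fx0.
  by rewrite inE x0R x0S.
apply: comp_conn => //; apply/indepP => u v; rewrite !inE.
case uS: (u \in S); case vS: (v \in S); rewrite ?orbT ?orbF => uX vX.
- by move/indepP: iS; apply.
- by move/freeP: (freeRs v vX (negbT vS)) => /(_ u uS); rewrite esym.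
- by move/freeP: (freeRs u uX (negbT uS)) => /(_ v vS).
- by move/indepP: (IT_indep IRs); apply.
Qed.

Lemma lemB R S x w : IT R -> IT S -> #|R :\: S| <= d ->
  x \in R -> x \notin S -> pb w = pb x -> free R w -> free S w -> conn R S.
Proof.
move=> IR IS le xR xS ewx fwR fwS.
have [wx|nwx] := eqVneq w x.
  by subst w; exact: (lemA IR IS le xR xS fwS).
have [IR1 r1] := swap_IT IR xR ewx nwx fwR.
apply: conn_trans (conn_step r1) _.
have xRS : x \in R :\: S by rewrite inE xS xR.
case wS: (w \in S).
  apply: IHd => //; apply: leq_trans le; apply: (card_sub_lt _ xRS).
  apply/subsetP => z; rewrite !inE; case: (eqVneq z w) => [->|]; first by rewrite wS.
  by move=> _ /= /andP [-> /andP [-> ->]].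
apply: (@lemA _ _ w) => //; last by rewrite wS.
  apply: leq_trans le.
  have : #|(w |: (R :\ x)) :\: S| <= #|w |: ((R :\: S) :\ x)|.
    apply/subset_leq_card/subsetP => z; rewrite !inE.
    by case: (z == w) => //= /andP [-> /andP [-> ->]].
  move/leq_trans; apply; rewrite cardsU1 (cardsD1 x (R :\: S)) xRS.
  by case: (w \notin _).
by rewrite setU11.
Qed.

End Reduction.


Lemma deg_le x : #|nbhd e x| <= Dl.
Proof. exact: (@leq_bigmax _ (fun x => degree e x) x). Qed.

Lemma counting Z X : {in Z &, injective pb} -> 0 < #|Z| -> #|X| <= 2 * #|Z| ->
  exists w z, [/\ z \in Z, pb w = pb z & free X w].
Proof.
move=> inj Z0 XZ.
pose I := pb @: Z.
have cI : #|I| = #|Z| by rewrite card_in_imset.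
have IP : I \subset P by apply/subsetP => B /imsetP [z _ ->]; exact: pb_mem.
have tI : trivIset I := trivIsetS IP tiP.
have c1 : #|I| * (2 * Dl).+1 <= #|cover I|.
  rewrite -(eqP tI) -sum_nat_const; apply: leq_sum => B BI.
  apply: Psize; exact: (subsetP IP).
pose NX := \bigcup_(x in X) nbhd e x.
have c2 : #|NX| <= \sum_(x in X) #|nbhd e x|.
  rewrite /NX; elim/big_rec2: _ => [|x n U _ le]; first by rewrite cards0.
  by rewrite (leq_trans (leq_card_setU _ _).1) ?leq_add2l.
have c3 : \sum_(x in X) #|nbhd e x| <= #|X| * Dl.
  rewrite -sum_nat_const; apply: leq_sum => x _; exact: deg_le.
have : ~~ (cover I \subset NX).
  apply/negP => /subset_leq_card; rewrite leqNgt; move/negP; apply.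
  apply: leq_ltn_trans (leq_trans c2 c3) _; apply: leq_trans c1.
  rewrite cI; nia.
case/subsetPn => w /bigcupP [B /imsetP [z zZ ->] wz] wN.
exists w, z; split => //; first exact: pb_same.
apply/freeP => x xX; rewrite esym; apply: contraNN wN => exw.
by apply/bigcupP; exists x => //; rewrite inE.
Qed.


Lemma freeU X Y w : free (X :|: Y) w = free X w && free Y w.
Proof.
apply/idP/andP => [/freeP H|[/freeP H1 /freeP H2]].
  by split; apply/freeP => x xX; apply: H; rewrite inE xX ?orbT.
by apply/freeP => x; rewrite inE => /orP [/H1|/H2].
Qed.

Lemma free_sub X Y w : X \subset Y -> free Y w -> free X w.
Proof. by move=> /subsetP sXY /freeP H; apply/freeP => x /sXY /H. Qed.

Local Notation b := Dl.+2.

Fixpoint enc (f : nat -> nat) n :=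
  if n is n'.+1 then f 0 * b ^ n' + enc (fun m => f m.+1) n' else 0.

Lemma enc_bound f n : (forall m, f m < b) -> enc f n < b ^ n.
Proof.
elim: n f => [|n IH] f fb /=; first by [].
have := IH (fun m => f m.+1) (fun m => fb m.+1).
have := fb 0; rewrite expnS; move: (b ^ n) (enc _ n) (f 0) => B E F h1 h2.
nia.
Qed.

Lemma enc_lt f g n p : (forall m, f m < b) -> (forall m, g m < b) -> p < n ->
  (forall m, m < p -> g m <= f m) -> g p < f p -> enc g n < enc f n.
Proof.
elim: n f g p => [|n IH] f g p fb gb //= pn le lt.
case: p pn le lt => [|p] pn le lt.
  have := @enc_bound (fun m => g m.+1) n (fun m => gb m.+1).
  move: (b ^ n) (enc (fun m => g m.+1) n) (enc (fun m => f m.+1) n) => B E1 E2 h.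
  nia.
have h1 := le 0 isT.
have h2 : enc (fun m => g m.+1) n < enc (fun m => f m.+1) n.
  apply: (IH _ _ p) => //; try solve [move=> m; apply: fb | move=> m; apply: gb |
    move=> m mp; apply: le; exact: mp].
move: (b ^ n) (enc (fun m => g m.+1) n) (enc (fun m => f m.+1) n) h2 => B E1 E2 h2.
nia.
Qed.


Definition ys (s : seq (T * T)) := [set x | x \in map fst s].
Definition cs (s : seq (T * T)) := [set x | x \in map snd s].

Lemma ys_take s i : ys (take i s) \subset ys s.
Proof. by apply/subsetP => x; rewrite !inE map_take => /mem_take. Qed.
Lemma cs_take s i : cs (take i s) \subset cs s.
Proof. by apply/subsetP => x; rewrite !inE map_take => /mem_take. Qed.
Lemma card_ys s : #|ys s| <= size s.
Proof. by rewrite cardsE -(size_map fst); apply: card_size. Qed.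

Section Inner.
Variable d : nat.
Hypothesis IHd : forall R S, IT R -> IT S -> #|R :\: S| < d -> conn R S.
Variables (A A' : {set T}) (x0 : T).
Hypothesis d0 : 0 < d.
Hypothesis cA : #|A| = d.
Hypothesis cA' : #|A'| = d.
Hypothesis AA' : forall a, a \in A -> a \notin A'.
Hypothesis Amatch : forall a, a \in A -> exists2 a', a' \in A' & pb a' = pb a.
Hypothesis A'match : forall a, a \in A' -> exists2 a', a' \in A & pb a' = pb a.

Definition config C := IT (A :|: C) && IT (A' :|: C).

Lemma cfg_disj C a : config C -> a \in A -> a \notin C.
Proof.
case/andP => _ I' aA; apply/negP => aC.
have [a' a'A' ea] := Amatch aA.
have := (IT_tr I').2 a' a; rewrite !inE a'A' aC orbT => /(_ isT isT ea) ea'.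
by move: (AA' aA); rewrite -ea' a'A'.
Qed.

Lemma cfg_disj' C a : config C -> a \in A' -> a \notin C.
Proof.
case/andP => I _ aA; apply/negP => aC.
have [a' a'A ea] := A'match aA.
have := (IT_tr I).2 a' a; rewrite !inE a'A aC orbT => /(_ isT isT ea) ea'.
by move: (AA' a'A); rewrite ea' aA.
Qed.

Definition cond C (pre : seq (T * T)) (p : T * T) :=
  [&& p.2 \in C, e p.1 p.2, free (A :|: A' :|: ys pre :|: cs pre) p.1 &
      [exists z in A :|: cs pre, pb p.1 == pb z]].

Fixpoint validA C pre s :=
  if s is p :: s' then cond C pre p && validA C (rcons pre p) s' else true.
Definition valid C s := validA C [::] s.

Lemma validA_cat C pre s1 s2 :
  validA C pre (s1 ++ s2) = validA C pre s1 && validA C (pre ++ s1) s2.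
Proof.
elim: s1 pre => [|p s1 IH] pre /=; first by rewrite cats0.
by rewrite IH cat_rcons andbA.
Qed.

Lemma valid_rcons C s p : valid C (rcons s p) = valid C s && cond C s p.
Proof. by rewrite /valid -cats1 validA_cat /= andbT. Qed.

Lemma valid_take C s i : valid C s -> valid C (take i s).
Proof. by rewrite -{1}(cat_take_drop i s) /valid validA_cat => /andP []. Qed.

Lemma valid_nth C s i : valid C s -> i < size s -> cond C (take i s) (nth (x0, x0) s i).
Proof.
move=> V lt; move: V; rewrite -{1}(cat_take_drop i s) (drop_nth (x0, x0) lt).
by rewrite /valid validA_cat /= => /and3P [].
Qed.

Lemma valid_inC C s p : valid C s -> p \in s -> p.2 \in C.
Proof.
move=> V /(nthP (x0, x0)) [i lt <-]; by case/and4P: (valid_nth V lt).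
Qed.

Lemma validA_mono C C' pre s : validA C pre s -> (forall p, p \in s -> p.2 \in C') ->
  validA C' pre s.
Proof.
elim: s pre => [|p s IH] pre //= /andP [cp V] H.
rewrite IH // ?andbT; last by move=> q qs; apply: H; rewrite inE qs orbT.
by case/and4P: cp => _ h2 h3 h4; rewrite /cond h2 h3 h4 H // inE eqxx.
Qed.

Lemma valid_uniq C s : valid C s -> uniq (map snd s).
Proof.
elim/last_ind: s => [|s p IH] //; rewrite valid_rcons => /andP [V c].
rewrite map_rcons rcons_uniq IH // andbT.
case/and4P: c => _ ep fr _; apply: contraTN ep => ps.
have : p.2 \in cs s by rewrite inE.
move: fr; rewrite !freeU => /andP [_ /freeP H]; exact: H.
Qed.

Lemma valid_size C s : valid C s -> size s <= #|T|.
Proof.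
move/valid_uniq => /card_uniqP; rewrite size_map => <-; exact: max_card.
Qed.

Lemma card_cs C s : valid C s -> #|cs s| = size s.
Proof. by move/valid_uniq => /card_uniqP; rewrite cardsE size_map. Qed.

Definition vals C s m :=
  if m < size s then #|[set z in C | e (nth (x0, x0) s m).1 z]| else Dl.+1.

Lemma vals_lt C s m : vals C s m < b.
Proof.
rewrite /vals; case: ifP => // _; rewrite ltnS; apply: leqW; apply: leq_trans (deg_le (nth (x0, x0) s m).1).
by apply/subset_leq_card/subsetP => z; rewrite !inE => /andP [].
Qed.

Definition mu C s := enc (vals C s) #|T|.

Definition lexlt L (f g : nat -> nat) :=
  exists2 p, p < L & (forall m, m < p -> f m <= g m) /\ f p < g p.

Lemma lexlt_mu C s C' s' : valid C s -> lexlt (size s) (vals C' s') (vals C s) ->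
  mu C' s' < mu C s.
Proof.
move=> V [p ps [le lt]]; apply: (enc_lt _ _ (p := p)) => //; try exact: vals_lt.
exact: leq_trans ps (valid_size V).
Qed.

Lemma diff_le C : config C -> #|(A :|: C) :\: (A' :|: C)| <= d.
Proof.
move=> cf; rewrite -cA; apply/subset_leq_card/subsetP => u; rewrite !inE.
by case: (u \in C); rewrite ?orbT ?orbF //= => /andP [].
Qed.

Lemma caseA C w z : config C -> z \in A -> pb w = pb z ->
  free (A :|: A' :|: C) w -> conn (A :|: C) (A' :|: C).
Proof.
move=> cf zA ewz fw; have /andP [I I'] := cf.
apply: (@lemB d IHd _ _ z w) => //; first exact: diff_le.
- by rewrite inE zA.
- by rewrite inE (negbTE (AA' zA)) (negbTE (cfg_disj cf zA)).
- by move: fw; rewrite !freeU => /andP [/andP [-> _] ->].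
- by move: fw; rewrite !freeU => /andP [/andP [_ ->] ->].
Qed.

Lemma setEq X C c w : c \notin X -> c != w ->
  X :|: (w |: (C :\ c)) = w |: ((X :|: C) :\ c).
Proof.
move=> cX cw; apply/setP => u; rewrite !inE.
case: (eqVneq u c) => [->|nuc]; first by rewrite (negbTE cX) (negbTE cw).
by case: (u \in X); case: (u == w); case: (u \in C).
Qed.

Lemma nb_sub C c w u : ~~ e u w ->
  [set z in w |: (C :\ c) | e u z] \subset [set z in C | e u z].
Proof.
move=> nuw; apply/subsetP => z; rewrite !inE.
case/andP => /orP [/eqP zw|/andP [_ zC]] euz; last by rewrite zC euz.
by rewrite -zw euz in nuw.
Qed.

Lemma swapL L : forall C s w, size s <= L -> config C -> valid C s ->
  free (A :|: A' :|: C :|: ys s) w -> [exists z in A :|: cs s, pb w == pb z] ->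
  (forall C' s', config C' -> valid C' s' -> lexlt (size s) (vals C' s') (vals C s) ->
      conn (A :|: C') (A' :|: C')) ->
  conn (A :|: C) (A' :|: C).
Proof.
elim: L => [|L IHL] C s w sL cf V fw /exists_inP [z zZ /eqP ewz] H.
  move: zZ; rewrite inE; case zA: (z \in A) => /=.
    by move=> _; apply: (caseA cf zA ewz); move: fw; rewrite freeU => /andP [].
  by move: sL; rewrite leqn0 => /nilP ->; rewrite inE.
move: zZ; rewrite inE; case zA: (z \in A) => /=.
  by move=> _; apply: (caseA cf zA ewz); move: fw; rewrite freeU => /andP [].
rewrite inE => /(nthP x0) [i]; rewrite size_map => lt.
rewrite (nth_map (x0, x0)) // => ez.
have ci := valid_nth V lt.
case ep: (nth (x0, x0) s i) ci ez => [y c] ci /= ez; subst z.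
case/and4P: ci => /= cC eyc fy /exists_inP [z' z'Z /eqP eyz'].
have yS : y \in ys s by rewrite inE; apply/mapP; exists (y, c) => //; rewrite -ep mem_nth.
have nwy : ~~ e w y by move: fw; rewrite freeU => /andP [_ /freeP]; apply.
have nyw : ~~ e y w by rewrite esym.
have cw : c != w by apply: contraNneq nwy => <-; rewrite esym.
have cA0 : c \notin A by apply: contraTN cC => cA1; exact: cfg_disj cf cA1.
have cA1 : c \notin A' by apply: contraTN cC => cA1; exact: cfg_disj' cf cA1.
have /andP [I I'] := cf.
have fwR : free (A :|: C) w.
  by move: fw; rewrite !freeU => /andP [/andP [/andP [-> _] ->] _].
have fwS : free (A' :|: C) w.
  by move: fw; rewrite !freeU => /andP [/andP [/andP [_ ->] ->] _].
have ewc : pb w = pb c by [].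
have cR : c \in A :|: C by rewrite inE cC orbT.
have cS : c \in A' :|: C by rewrite inE cC orbT.
have wc : w != c by rewrite eq_sym.
have [IR1 r1] := @swap_IT (A :|: C) c w I cR ewc wc fwR.
have [IS1 s1] := @swap_IT (A' :|: C) c w I' cS ewc wc fwS.
pose C1 := w |: (C :\ c).
rewrite -(setEq _ cA0 cw) -/C1 in IR1 r1.
rewrite -(setEq _ cA1 cw) -/C1 in IS1 s1.
have cf1 : config C1 by rewrite /config IR1 IS1.
suff conn1 : conn (A :|: C1) (A' :|: C1).
  apply: conn_trans (conn_step r1) _; apply: conn_trans conn1 _.
  exact: conn_sym (conn_step s1).
have Vt : valid C1 (take i s).
  apply: validA_mono (valid_take i V) _ => q qt.
  have qC := valid_inC V (mem_take qt).
  rewrite !inE qC andbT; apply/orP; right; apply: contraTneq eyc => qc.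
  move: fy; rewrite !freeU => /andP [_ /freeP]; apply.
  by rewrite inE -qc; apply/mapP; exists q.
have size_t : size (take i s) = i by rewrite size_take lt.
have nth_t m : m < i -> nth (x0, x0) (take i s) m = nth (x0, x0) s m.
  by move=> mi; rewrite nth_take.
have le_m m : m < i -> #|[set z in C1 | e (nth (x0, x0) s m).1 z]| <=
                      #|[set z in C | e (nth (x0, x0) s m).1 z]|.
  move=> mi; apply/subset_leq_card/nb_sub.
  have : (nth (x0, x0) s m).1 \in ys s.
    by rewrite inE; apply/mapP; exists (nth (x0, x0) s m) => //; rewrite mem_nth // (ltnT mi lt).
  by move: fw; rewrite freeU => /andP [_ /freeP] H1 /H1; rewrite esym.
have lt_i : #|[set z in C1 | e y z]| < #|[set z in C | e y z]|.
  apply: (@card_sub_lt _ _ c); last by rewrite inE cC eyc.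
  apply/subsetP => z; rewrite !inE => /andP [/orP [/eqP zw|/andP [zc zC]] eyz].
    by rewrite -zw eyz in nyw.
  by rewrite zc zC eyz.
clearbody C1.
have [Nb0|/set0Pn [c' c'N]] := eqVneq [set z in C1 | e y z] set0.
  apply: (IHL C1 (take i s) y) => //.
  - by rewrite size_t -ltnS; exact: leq_trans lt sL.
  - rewrite !freeU; move: fy; rewrite !freeU => /andP [/andP [/andP [-> ->] ->] _] /=.
    rewrite andbT.
    apply/freeP => z zC1; apply: contraT => /negbNE eyz.
    have : z \in [set z in C1 | e y z] by rewrite inE zC1 eyz.
    by rewrite Nb0 inE.
  - by apply/exists_inP; exists z' => //; rewrite eyz'.
  - move=> C' s' cf' V' [q qi [lq ltq]]; apply: (H C' s') => //.
    rewrite /lexlt size_t in qi *; exists q; first exact: ltnT qi lt.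
    split.
      move=> m mq; apply: leq_trans (lq m mq) _.
      have mi : m < i by exact: ltnT mq qi.
      rewrite /vals size_t mi (ltnT mi lt) nth_t //; exact: le_m.
    apply: leq_trans ltq _; rewrite /vals size_t qi (ltnT qi lt) nth_t //; exact: le_m.
pose s' := rcons (take i s) (y, c').
have V' : valid C1 s'.
  rewrite valid_rcons Vt /cond /=; move: c'N; rewrite inE => /andP [-> ->] /=.
  by rewrite fy; apply/exists_inP; exists z' => //; rewrite eyz'.
apply: (H C1 s') => //; rewrite /lexlt; exists i => //; split.
  move=> m mi; rewrite /vals size_rcons size_t ltnS (ltnW mi) (ltnT mi lt).
  rewrite nth_rcons size_t mi nth_t //; exact: le_m.
rewrite /vals size_rcons size_t ltnSn lt nth_rcons size_t ltnn eqxx ep /=.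
exact: lt_i.
Qed.

Lemma cs_C C s : valid C s -> cs s \subset C.
Proof.
by move=> V; apply/subsetP => u; rewrite inE => /mapP [q qs ->]; exact: valid_inC V qs.
Qed.

Lemma inner n : forall C s, mu C s < n -> config C -> valid C s ->
  conn (A :|: C) (A' :|: C).
Proof.
elim: n => [|n IHn] C s // mun cf V.
have /andP [I I'] := cf.
have csC := cs_C V.
have AcsE : A :&: cs s = set0.
  apply/setP => u; rewrite inE [u \in set0]inE; apply/negP => /andP [uA uc].
  by move: (cfg_disj cf uA); rewrite (subsetP csC u uc).
have inj : {in A :|: cs s &, injective pb}.
  move=> u v uZ vZ; apply: (IT_tr I).2.
    by move: uZ; rewrite !in_setU => /orP [->//|/(subsetP csC) ->]; rewrite orbT.
  by move: vZ; rewrite !in_setU => /orP [->//|/(subsetP csC) ->]; rewrite orbT.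
have cZ : #|A :|: cs s| = d + size s.
  by rewrite cardsU AcsE cards0 subn0 cA (card_cs V).
have Z0 : 0 < #|A :|: cs s| by rewrite cZ; lia.
have cX : #|A :|: A' :|: ys s :|: cs s| <= 2 * #|A :|: cs s|.
  rewrite cZ; apply: leq_trans (leq_card_setU _ _).1 _.
  rewrite (card_cs V); apply: leq_trans (leq_add (leq_card_setU _ _).1 (leqnn _)) _.
  apply: leq_trans (leq_add (leq_add (leq_card_setU _ _).1 (leqnn _)) (leqnn _)) _.
  have := card_ys s; rewrite cA cA'; lia.
have [w [z [zZ ewz fw]]] := counting inj Z0 cX.
have blk : [exists z in A :|: cs s, pb w == pb z] by apply/exists_inP; exists z => //; rewrite ewz.
case: (boolP [exists c in C, e w c]) => [/exists_inP [c cC ewc]|nC].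
  pose s1 := rcons s (w, c).
  have V1 : valid C s1 by rewrite valid_rcons V /cond /= cC ewc fw blk.
  suff lt1 : mu C s1 < mu C s.
    by apply: (IHn C s1) => //; apply: leq_trans lt1 _; rewrite -ltnS.
  apply: (enc_lt _ _ (p := size s)); try exact: vals_lt.
  - by have := valid_size V1; rewrite size_rcons.
  - move=> m ms; rewrite /vals size_rcons ms (leqW ms).
    by rewrite nth_rcons ms.
  - rewrite /vals size_rcons ltnSn ltnn nth_rcons ltnn eqxx /= ltnS.
    apply: leq_trans (deg_le w).
    by apply/subset_leq_card/subsetP => u; rewrite !inE => /andP [].
have fC : free C w.
  apply/freeP => c cC; apply: contra nC => ewc; apply/exists_inP; by exists c.
apply: (@swapL (size s) C s w) => //.
  move: fw; rewrite !freeU => /andP [/andP [/andP [-> ->] ->] _].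
  by rewrite fC.
move=> C' s' cf' V' lt; apply: (IHn C' s') => //.
by apply: leq_trans (lexlt_mu V lt) _; rewrite -ltnS.
Qed.

End Inner.

Lemma main d : forall R S, IT R -> IT S -> #|R :\: S| <= d -> conn R S.
Proof.
elim: d => [|d IHd] R S IR IS le.
  have -> : R = S by apply: IT_eq => //; apply/eqP; rewrite -leqn0.
  exact: connect0.
case: (leqP #|R :\: S| d) => [le'|gt]; first exact: IHd.
have cRS : #|R :\: S| = d.+1 by apply/eqP; rewrite eqn_leq le gt.
have cSR : #|S :\: R| = d.+1.
  by rewrite -cRS !cardsD (card_IT IR) (card_IT IS) setIC.
have [covR unR] := IT_tr IR; have [covS unS] := IT_tr IS.
have /set0Pn [x0 _] : R :\: S != set0 by rewrite -card_gt0 cRS.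
have IH' : forall R S, IT R -> IT S -> #|R :\: S| < d.+1 -> conn R S.
  by move=> R' S' IR' IS'; rewrite ltnS; apply: IHd.
have ER : (R :\: S) :|: (R :&: S) = R.
  by apply/setP => u; rewrite !inE; case: (u \in R); case: (u \in S).
have ES : (S :\: R) :|: (R :&: S) = S.
  by apply/setP => u; rewrite !inE; case: (u \in R); case: (u \in S).
have h1 : forall a, a \in R :\: S -> a \notin S :\: R.
  by move=> a; rewrite !inE => /andP [aS _]; rewrite (negbTE aS) andbF.
have h2 : forall a, a \in R :\: S -> exists2 a', a' \in S :\: R & pb a' = pb a.
  move=> a; rewrite inE => /andP [aS aR]; have [s sS esa] := covS a.
  exists s => //; rewrite inE sS andbT; apply: contraNN aS => sR.
  by rewrite -(unR _ _ sR aR esa).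
have h3 : forall a, a \in S :\: R -> exists2 a', a' \in R :\: S & pb a' = pb a.
  move=> a; rewrite inE => /andP [aR aS]; have [s sR esa] := covR a.
  exists s => //; rewrite inE sR andbT; apply: contraNN aR => sS.
  by rewrite -(unS _ _ sS aS esa).
have := @inner d.+1 IH' (R :\: S) (S :\: R) x0 (ltn0Sn d) cRS cSR h1 h2 h3 _ (R :&: S) [::] (ltnSn _).
rewrite ER ES; apply => //.
by rewrite /config ER ES IR IS.
Qed.

Lemma path_rr S p : path rr S p -> path (RG_adj e P) S p /\ all IT p.
Proof.
elim: p S => [|S' p IH] S //= /andP [/and3P [_ IS' adj] pp].
by have [-> ->] := IH _ pp; rewrite adj IS'.
Qed.

End Proof.

Unset Implicit Arguments.

Theorem corollary6p3 (T : finType) (e : rel T) (P : {set {set T}}) :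
  symmetric e -> irreflexive e ->
  partition P [set: T] ->
  (forall B, B \in P -> (2 * maxdeg e).+1 <= #|B|) ->
  RG_connected e P.
Proof.
move=> esym eirr Ppart Psize S S' IS IS'.
have := @main T e P esym eirr Ppart Psize #|S :\: S'| S S' IS IS' (leqnn _).
case/connectP => p pp ->.
have [pa al] := path_rr pp.
by exists p; split.
Qed.
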